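(* If an $n$-agent network is $(k+1)$-redundant with $k\ge 0$, then it is $k$-redundant.
   Context: An $n$-agent network: agents $\mathcal V=\{1,\dots,n\}$, each agent $i$ having real matrices $A_i\in\mathbb R^{r_i\times d}$, $b_i\in\mathbb R^{r_i}$. The network is $k$-redundant ($k\in\{0,1,\dots,n-1\}$) if for any $\mathcal S_1,\mathcal S_2\subset\mathcal V$ with $|\mathcal S_1|=|\mathcal S_2|=n-k$, $\arg\min_x\sum_{i\in\mathcal S_1}\|A_ix-b_i\|_2^2=\arg\min_x\sum_{i\in\mathcal S_2}\|A_ix-b_i\|_2^2$ (so $(k+1)$-redundancy presupposes $k+1\le n-1$). *)

(* Defs.v *)
From HB Require Import structures.
From mathcomp Require Import all_boot all_order all_algebra.
From mathcomp Require Import reals.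
Set Implicit Arguments. Unset Strict Implicit. Unset Printing Implicit Defensive.
Import Order.TTheory GRing.Theory Num.Theory.
Local Open Scope ring_scope.

Definition sqnorm (R : realType) (m : nat) (v : 'cV[R]_m) : R :=
  \sum_(j < m) (v j 0) ^+ 2.

Definition cost (R : realType) (n d : nat) (r : 'I_n -> nat)
  (A : forall i : 'I_n, 'M[R]_(r i, d)) (b : forall i : 'I_n, 'cV[R]_(r i))
  (S : {set 'I_n}) (x : 'cV[R]_d) : R :=
  \sum_(i in S) sqnorm (A i *m x - b i).

Definition argmin (R : realType) (n d : nat) (r : 'I_n -> nat)
  (A : forall i : 'I_n, 'M[R]_(r i, d)) (b : forall i : 'I_n, 'cV[R]_(r i))
  (S : {set 'I_n}) : 'cV[R]_d -> Prop :=
  fun x => forall y : 'cV[R]_d, cost A b S x <= cost A b S y.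

Definition k_redundant (R : realType) (n d : nat) (r : 'I_n -> nat)
  (A : forall i : 'I_n, 'M[R]_(r i, d)) (b : forall i : 'I_n, 'cV[R]_(r i))
  (k : nat) : Prop :=
  (k < n)%N /\
  forall S1 S2 : {set 'I_n}, #|S1| = (n - k)%N -> #|S2| = (n - k)%N ->
    argmin A b S1 = argmin A b S2.

(* Main.v *)
Require Import Defs.
From HB Require Import structures.
From mathcomp Require Import all_boot all_order all_algebra.
From mathcomp Require Import reals.
From mathcomp Require Import zify ring lra.
From Stdlib Require Import FunctionalExtensionality PropExtensionality.
Set Implicit Arguments. Unset Strict Implicit. Unset Printing Implicit Defensive.
Import Order.TTheory GRing.Theory Num.Theory.
Local Open Scope ring_scope.

Section Aux.
Variable R : realType.

Lemma sqnormE m (v : 'cV[R]_m) : sqnorm v = (v^T *m v) 0 0.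
Proof. rewrite /sqnorm !mxE; apply: eq_bigr => j _; rewrite !mxE expr2. by []. Qed.

Lemma sqnorm_ge0 m (v : 'cV[R]_m) : 0 <= sqnorm v.
Proof. apply: sumr_ge0 => j _; exact: sqr_ge0. Qed.

Lemma sqnorm_eq0 m (v : 'cV[R]_m) : sqnorm v = 0 -> v = 0.
Proof.
move=> /eqP; rewrite /sqnorm psumr_eq0 => [/allP H|j _]; last exact: sqr_ge0.
apply/matrixP => i j; rewrite ord1 mxE; apply/eqP; rewrite -sqrf_eq0.
exact: (H i (mem_index_enum _)).
Qed.

Lemma sqnormD m (w e : 'cV[R]_m) :
  sqnorm (w + e) = sqnorm w + sqnorm e + 2 * (w^T *m e) 0 0.
Proof.
have tD : (w + e)^T = w^T + e^T by apply/matrixP=> i j; rewrite !mxE.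
rewrite !sqnormE tD mulmxDl !mulmxDr.
rewrite !mxE.
rewrite (_ : \sum_j e^T 0 j * w j 0 = \sum_j w^T 0 j * e j 0); last first.
  by apply: eq_bigr => j _; rewrite !mxE mulrC.
by rewrite mulr_natl mulr2n !addrA -!addrA; congr (_ + _); rewrite [RHS]addrC -addrA.
Qed.

Variables (n d : nat) (r : 'I_n -> nat)
  (A : forall i : 'I_n, 'M[R]_(r i, d)) (b : forall i : 'I_n, 'cV[R]_(r i)).

Lemma exists_argmin (S : {set 'I_n}) : exists x, argmin A b S x.
Proof.
pose P := \sum_(i in S) (A i)^T *m A i.
pose q := \sum_(i in S) (A i)^T *m b i.
have PT : P^T = P.
  by rewrite /P raddf_sum; apply: eq_bigr => i _; rewrite /= trmx_mul trmxK.
have key : forall v : 'cV_d, P *m v = 0 -> forall i, i \in S -> A i *m v = 0.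
  move=> v Pv i iS.
  have : \sum_(i in S) sqnorm (A i *m v) = 0.
    transitivity ((v^T *m P *m v) 0 0); last by rewrite -mulmxA Pv mulmx0 mxE.
    rewrite /P mulmx_sumr mulmx_suml summxE; apply: eq_bigr => j _.
    by rewrite sqnormE trmx_mul !mulmxA.
  move/eqP; rewrite psumr_eq0 => [/allP H|j _]; last exact: sqnorm_ge0.
  apply: sqnorm_eq0; apply/eqP; have := H i (mem_index_enum _); rewrite iS.
  by [].
have qin : (q^T <= P)%MS.
  rewrite submxE; apply/eqP/matrixP => i j; rewrite ord1 [RHS]mxE.
  have Pv : P *m col j (cokermx P) = 0 by rewrite colE mulmxA mulmx_coker mul0mx.
  have -> : (q^T *m cokermx P) 0 j = (q^T *m col j (cokermx P)) 0 0.
    by rewrite !mxE; apply: eq_bigr => k _; rewrite !mxE.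
  rewrite /q raddf_sum mulmx_suml summxE big1 // => k kS.
  by rewrite /= trmx_mul trmxK -mulmxA key // mulmx0 mxE.
have [D qD] := submxP qin.
have Px : P *m D^T = q by rewrite -[q]trmxK qD trmx_mul PT.
exists D^T => y; set x := D^T; set u := y - x.
have E : cost A b S y = \sum_(i in S) (sqnorm (A i *m u) + sqnorm (A i *m x - b i)
   + 2 * ((u^T *m ((A i)^T *m (A i *m x - b i))) 0 0)).
  rewrite /cost; apply: eq_bigr => i _; rewrite mulmxA -trmx_mul -sqnormD.
  by rewrite /u mulmxBr addrA subrK.
rewrite E !big_split /= -mulr_sumr -summxE -mulmx_sumr.
have -> : \sum_(i in S) (A i)^T *m (A i *m x - b i) = P *m x - q.
  rewrite /P /q mulmx_suml -sumrB; apply: eq_bigr => i _.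
  by rewrite mulmxBr mulmxA.
rewrite Px subrr mulmx0 mxE mulr0 addr0 addrC lerDl.
by apply: sumr_ge0 => i _; exact: sqnorm_ge0.
Qed.

Lemma cost_avg (S : {set 'I_n}) x : (0 < #|S|)%N ->
  \sum_(j in S) cost A b (S :\ j) x = (#|S|.-1)%:R * cost A b S x.
Proof.
move=> h.
have H j : j \in S -> cost A b S x = sqnorm (A j *m x - b j) + cost A b (S :\ j) x.
  move=> jS; rewrite /cost (bigD1 j) //=; congr (_ + _); apply: eq_bigl => i.
  by rewrite in_setD1 andbC.
rewrite (eq_bigr (fun j => cost A b S x - sqnorm (A j *m x - b j))); last first.
  by move=> j jS; rewrite (H j jS) addrAC subrr add0r.
rewrite big_split /= sumrN sumr_const -/(cost A b S x).
move: h; case: #|S| => [//|m] _.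
by rewrite mulrSr addrK mulr_natl.
Qed.
End Aux.

Theorem corollary2 (R : realType) (n d : nat) (r : 'I_n -> nat)
  (A : forall i : 'I_n, 'M[R]_(r i, d)) (b : forall i : 'I_n, 'cV[R]_(r i))
  (k : nat) :
  k_redundant A b k.+1 -> k_redundant A b k.
Proof.
case=> ltn H; split; first exact: ltnW.
have key : forall S : {set 'I_n}, #|S| = (n - k)%N -> forall j0, j0 \in S ->
    argmin A b S = argmin A b (S :\ j0).
  move=> S cS j0 j0S.
  have cT : forall j, j \in S -> #|S :\ j| = (n - k.+1)%N.
    by move=> j jS; have := cardsD1 j S; rewrite jS cS; lia.
  have XT : forall j, j \in S -> argmin A b (S :\ j) = argmin A b (S :\ j0).
    by move=> j jS; apply: H; [exact: cT|exact: cT].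
  have [x0 hx0] := exists_argmin A b (S :\ j0).
  have mpos : (0 < #|S|.-1)%N by rewrite cS; lia.
  have Spos : (0 < #|S|)%N by rewrite cS; lia.
  have hx0j : forall j, j \in S -> argmin A b (S :\ j) x0.
    by move=> j jS; have := hx0; rewrite -(XT j jS).
  apply: functional_extensionality => x; apply: propositional_extensionality; split.
  - move=> hx y.
    apply: le_trans (hx0 y).
    rewrite -subr_le0.
    have : \sum_(j in S) (cost A b (S :\ j) x - cost A b (S :\ j) x0) <= 0.
      rewrite big_split /= sumrN !cost_avg // -mulrBr.
      by apply: mulr_ge0_le0; [exact: ler0n | rewrite subr_le0; exact: hx].
    rewrite (bigD1 j0) //=; apply: le_trans; rewrite lerDl.
    apply: sumr_ge0 => j /andP[jS _]; rewrite subr_ge0; exact: hx0j.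
  - move=> hx y.
    have hxj : forall j, j \in S -> argmin A b (S :\ j) x.
      by move=> j jS; rewrite (XT j jS).
    rewrite -(ler_pM2l (_ : 0 < (#|S|.-1)%:R :> R)) ?ltr0n // -!cost_avg //.
    by apply: ler_sum => j jS; exact: hxj.
move=> S1 S2 c1 c2.
have [j1 j1S] : exists j, j \in S1 by apply/set0Pn; rewrite -card_gt0 c1; lia.
have [j2 j2S] : exists j, j \in S2 by apply/set0Pn; rewrite -card_gt0 c2; lia.
rewrite (key S1 c1 j1 j1S) (key S2 c2 j2 j2S); apply: H.
  by have := cardsD1 j1 S1; rewrite j1S c1; lia.
by have := cardsD1 j2 S2; rewrite j2S c2; lia.
Qed.
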